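(* Consider the discrete-time system $x(t+1) = A x(t) + B u(t) + C v(t) + w$ with $A \in \mathbb{R}^{d_x\times d_x}$, $B\in\mathbb{R}^{d_x\times d_u}$, $C \in\mathbb{R}^{d_x\times d_v}$, constant $w\in\mathbb{R}^{d_x}$, and disturbance $v(s) \in \mathcal V = \langle c_{\mathcal V}\mid G_{\mathcal V}\rangle$ with $G_{\mathcal V}\in\mathbb{R}^{d_v\times n_{\mathcal V}}$. Let $G_{\mathcal I} \in \mathbb{R}^{d_x\times n_{\mathcal I}}$, $\alpha \in \mathbb{R}^{d_x}$, $\gamma\in\mathbb{R}^{n_{\mathcal I}}$ with $\gamma \geq 0$, $\Gamma = \mathrm{diag}(\gamma)$, $\mathcal I = \langle \alpha \mid G_{\mathcal I}\Gamma\rangle$. For $s = 0,\ldots,t-1$ let $\beta(s)\in\mathbb{R}^{d_u}$, $\Phi(s)\in\mathbb{R}^{d_u\times n_{\mathcal I}}$, $G_{\mathcal F(s)}\in\mathbb{R}^{d_u\times m_s}$, $\psi(s)\in\mathbb{R}^{m_s}$ with $\psi(s)\geq 0$, $\Psi(s) = \mathrm{diag}(\psi(s))$. Define the reach set $\mathcal R_t(\mathcal I)$ as the set of states $x(t)$ obtained from $x(0) = \alpha + G_{\mathcal I}\Gamma\lambda$, inputs $u(s) = \beta(s) + \Phi(s)\lambda + G_{\mathcal F(s)}\Psi(s)\rho(s)$ and disturbances $v(s) \in\mathcal V$, $s = 0,\ldots,t-1$, as $\lambda$ ranges over $[-1,1]^{n_{\mathcal I}}$, each $\rho(s)$ over $[-1,1]^{m_s}$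 and each $v(s)$ over $\mathcal V$. Then $\mathcal R_t(\mathcal I)$ is the zonotope with $n_{\mathcal I} + \sum_{s=0}^{t-1}m_s + t\,n_{\mathcal V}$ generators, center \[ A^t\alpha + \sum_{s=0}^{t-1}A^{t-1-s}\big(B\beta(s) + Cc_{\mathcal V} + w\big), \] and generator matrix \[ \big[\,F_{\mathcal I}\ \ F_0\ \ F_1\ \cdots\ F_{t-1}\ \ A^{t-1}CG_{\mathcal V}\ \ A^{t-2}CG_{\mathcal V}\ \cdots\ CG_{\mathcal V}\,\big], \] where $F_{\mathcal I} = A^tG_{\mathcal I}\Gamma + \sum_{s=0}^{t-1}A^{t-1-s}B\Phi(s)$ and $F_s = A^{t-1-s}BG_{\mathcal F(s)}\Psi(s)$ for $s = 0,\ldots,t-1$.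
   Context: The notation $\langle c \mid G\rangle$ denotes the zonotope $\{c + G\lambda : \lambda \in [-1,1]^n\}$ with center $c$ and generator matrix $G$. $\mathrm{diag}(\gamma)$ is the diagonal matrix with $\gamma$ on its diagonal; $[M_1\ M_2\ \cdots]$ denotes horizontal concatenation. *)

(* Defs.v *)
From HB Require Import structures.
From mathcomp Require Import all_boot all_order all_algebra.
Set Implicit Arguments. Unset Strict Implicit. Unset Printing Implicit Defensive.
Import Order.TTheory GRing.Theory Num.Theory.
Local Open Scope ring_scope.

Definition in_box (R : realFieldType) (n : nat) (lam : 'cV[R]_n) : Prop :=
  forall i : 'I_n, -1 <= lam i 0 <= 1.

Definition in_zonotope (R : realFieldType) (d n : nat)
  (c : 'cV[R]_d) (G : 'M[R]_(d, n)) (x : 'cV[R]_d) : Prop :=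
  exists lam : 'cV[R]_n, in_box lam /\ x = c + G *m lam.

Fixpoint traj (R : realFieldType) (dx du dv : nat)
  (A : 'M[R]_dx) (B : 'M[R]_(dx, du)) (C : 'M[R]_(dx, dv)) (w : 'cV[R]_dx)
  (x0 : 'cV[R]_dx) (u : nat -> 'cV[R]_du) (v : nat -> 'cV[R]_dv) (k : nat)
  : 'cV[R]_dx :=
  match k with
  | 0 => x0
  | k'.+1 => A *m traj A B C w x0 u v k' + B *m u k' + C *m v k' + w
  end.

Definition in_reach_set (R : realFieldType) (dx du dv nV nI t : nat)
  (m : nat -> nat)
  (A : 'M[R]_dx) (B : 'M[R]_(dx, du)) (C : 'M[R]_(dx, dv)) (w : 'cV[R]_dx)
  (cV : 'cV[R]_dv) (GV : 'M[R]_(dv, nV))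
  (alpha : 'cV[R]_dx) (GI : 'M[R]_(dx, nI)) (gamma : 'cV[R]_nI)
  (beta : nat -> 'cV[R]_du) (Phi : nat -> 'M[R]_(du, nI))
  (GF : forall s, 'M[R]_(du, m s)) (psi : forall s, 'cV[R]_(m s))
  (x : 'cV[R]_dx) : Prop :=
  exists (lam : 'cV[R]_nI) (rho : forall s, 'cV[R]_(m s)) (v : nat -> 'cV[R]_dv),
    in_box lam /\
    (forall s, (s < t)%N -> in_box (rho s)) /\
    (forall s, (s < t)%N -> in_zonotope cV GV (v s)) /\
    x = traj A B C w (alpha + GI *m diag_mx gamma^T *m lam)
          (fun s => beta s + Phi s *m lam + GF s *m diag_mx (psi s)^T *m rho s)
          v t.

(* Main.v *)
Require Import Defs.
From HB Require Import structures.
From mathcomp Require Import all_boot all_order all_algebra.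
Import Order.TTheory GRing.Theory Num.Theory.
Local Open Scope ring_scope.


Lemma traj_eq (R : realFieldType) (dx du dv : nat)
  (A : 'M[R]_dx) (B : 'M[R]_(dx, du)) (C : 'M[R]_(dx, dv)) (w : 'cV[R]_dx)
  x0 u v t :
  traj A B C w x0 u v t = A ^+ t *m x0 + \sum_(s < t) A ^+ (t.-1 - s) *m (B *m u s + C *m v s + w).
Proof.
have mE : forall k, A *m A ^+ k = A ^+ k.+1 by move=> k; rewrite exprS.
elim: t => [|t IH] /=; first by rewrite big_ord0 expr0 mul1mx addr0.
rewrite IH big_ord_recr /= subnn expr0 mul1mx mulmxDr mulmxA mE.
rewrite mulmx_sumr -!addrA; congr (_ + _); rewrite !addrA; congr (_ + _ + _ + _).
apply: eq_bigr => [[s hs]] _ /=.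
rewrite mulmxA mE; congr (_ ^+ _ *m _).
by case: t hs IH => // t hs _; rewrite /= subSn.
Qed.

Lemma zmod6 (V : zmodType) (a b c d e f : V) :
  a + b + c + (d + e) + f = a + d + f + (b + (c + e)).
Proof.
rewrite -!addrA; congr (_ + _).
rewrite (addrCA c d) (addrCA b d); congr (_ + _).
by rewrite (addrC e f) (addrCA c f) (addrCA b f).
Qed.

Lemma key (R : realFieldType) (dx du dv nV nI t : nat)
  (m : nat -> nat)
  (A : 'M[R]_dx) (B : 'M[R]_(dx, du)) (C : 'M[R]_(dx, dv)) (w : 'cV[R]_dx)
  (cV : 'cV[R]_dv) (GV : 'M[R]_(dv, nV))
  (alpha : 'cV[R]_dx) (GI : 'M[R]_(dx, nI)) (gamma : 'cV[R]_nI)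
  (beta : nat -> 'cV[R]_du) (Phi : nat -> 'M[R]_(du, nI))
  (GF : forall s, 'M[R]_(du, m s)) (psi : forall s, 'cV[R]_(m s))
  (lam : 'cV[R]_nI) (rho : forall s, 'cV[R]_(m s)) (mu : 'I_t -> 'cV[R]_nV)
  (v : nat -> 'cV[R]_dv) (hv : forall i : 'I_t, v i = cV + GV *m mu i) :
  traj A B C w (alpha + GI *m diag_mx gamma^T *m lam)
          (fun s => beta s + Phi s *m lam + GF s *m diag_mx (psi s)^T *m rho s)
          v t =
  (A ^+ t *m alpha
    + \sum_(s < t) A ^+ (t.-1 - s) *m (B *m beta s + C *m cV + w)) +
  row_mx (A ^+ t *m GI *m diag_mx gamma^T
    + \sum_(s < t) A ^+ (t.-1 - s) *m B *m Phi s)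
      (row_mx (\mxrow_(s < t) (A ^+ (t.-1 - s) *m B *m GF s *m diag_mx (psi s)^T))
              (\mxrow_(j < t) (A ^+ (t.-1 - j) *m C *m GV)))
  *m col_mx lam (col_mx (\mxcol_(s < t) rho s) (\mxcol_(j < t) mu j)).
Proof.
rewrite traj_eq !mul_row_col !mul_mxrow_mxcol mulmxDl mulmx_suml.
rewrite mulmxDr !mulmxA -!addrA; congr (_ + _); rewrite addrCA; congr (_ + _).
rewrite -!big_split /=; apply: eq_bigr => i _; rewrite hv.
by rewrite !mulmxDr !mulmxA zmod6.
Qed.

Lemma in_box_col (R : realFieldType) n1 n2 (a : 'cV[R]_n1) (b : 'cV[R]_n2) :
  in_box a -> in_box b -> in_box (col_mx a b).
Proof.
move=> ha hb k; rewrite -(splitK k); case: (split k) => j /=;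
  by rewrite ?col_mxEu ?col_mxEd.
Qed.

Lemma in_box_mxcol (R : realFieldType) t (p_ : 'I_t -> nat)
  (f : forall i, 'cV[R]_(p_ i)) :
  (forall i, in_box (f i)) -> in_box (\mxcol_i f i).
Proof. by move=> h k; rewrite mxE; apply: h. Qed.

Lemma in_box_submxcol (R : realFieldType) t (p_ : 'I_t -> nat)
  (X : 'cV[R]_(\sum_i p_ i)) i :
  in_box X -> in_box (submxcol X i).
Proof. by move=> h k; rewrite mxE; apply: h. Qed.



Theorem proposition6p1 (R : realFieldType) (dx du dv nV nI t : nat)
  (m : nat -> nat)
  (A : 'M[R]_dx) (B : 'M[R]_(dx, du)) (C : 'M[R]_(dx, dv)) (w : 'cV[R]_dx)
  (cV : 'cV[R]_dv) (GV : 'M[R]_(dv, nV))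
  (alpha : 'cV[R]_dx) (GI : 'M[R]_(dx, nI)) (gamma : 'cV[R]_nI)
  (beta : nat -> 'cV[R]_du) (Phi : nat -> 'M[R]_(du, nI))
  (GF : forall s, 'M[R]_(du, m s)) (psi : forall s, 'cV[R]_(m s))
  (hgamma : forall i, 0 <= gamma i 0)
  (hpsi : forall s, (s < t)%N -> forall i, 0 <= psi s i 0) :
  let center : 'cV[R]_dx :=
    A ^+ t *m alpha
    + \sum_(s < t) A ^+ (t.-1 - s) *m (B *m beta s + C *m cV + w) in
  let FI : 'M[R]_(dx, nI) :=
    A ^+ t *m GI *m diag_mx gamma^T
    + \sum_(s < t) A ^+ (t.-1 - s) *m B *m Phi s in
  let G : 'M[R]_(dx, nI + ((\sum_(s < t) m s) + (\sum_(j < t) nV))) :=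
    row_mx FI
      (row_mx (\mxrow_(s < t) (A ^+ (t.-1 - s) *m B *m GF s *m diag_mx (psi s)^T))
              (\mxrow_(j < t) (A ^+ (t.-1 - j) *m C *m GV))) in
  forall x : 'cV[R]_dx,
    in_reach_set t A B C w cV GV alpha GI gamma beta Phi GF psi x
    <-> in_zonotope center G x.

Proof.
move=> center FI G x; split.
- case=> lam [rho [v [hl [hr [hv ->]]]]].
  have: forall i : 'I_t, exists mu, in_box mu /\ v i = cV + GV *m mu.
    by move=> i; apply: hv (ltn_ord i).
  case/fin_all_exists => mu hmu.
  exists (col_mx lam (col_mx (\mxcol_(s < t) rho s) (\mxcol_(j < t) mu j))); split.
    apply: in_box_col => //; apply: in_box_col; apply: in_box_mxcol => i.
      exact: hr (ltn_ord i).
    by case: (hmu i).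
  by rewrite (@key _ _ _ _ _ _ _ _ _ _ _ _ _ _ _ _ _ _ _ _ _ _ _ _ _ (fun i => proj2 (hmu i))).
- case=> lam' [hb ->].
  pose lam := usubmx lam'.
  pose r : 'cV[R]_(\sum_(s < t) m s) := usubmx (dsubmx lam').
  pose M : 'cV[R]_(\sum_(j < t) nV) := dsubmx (dsubmx lam').
  pose mu := fun j : 'I_t => @submxcol _ _ (fun _ => nV) 1 M j.
  pose rho : forall s, 'cV[R]_(m s) := fun s =>
    (if (s < t)%N as b return ((s < t)%N = b -> 'cV[R]_(m s))
     then fun h => @submxcol _ _ (fun i : 'I_t => m i) 1 r (Ordinal h)
     else fun _ => 0) (erefl _).
  have rhoE : forall i : 'I_t, rho i = submxcol r i.
    move=> [s hs]; rewrite /rho /=.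
    suff H : forall b (e : (s < t)%N = b),
      (if b as b0 return ((s < t)%N = b0 -> 'cV[R]_(m s))
       then fun h => @submxcol _ _ (fun i : 'I_t => m i) 1 r (Ordinal h)
       else fun _ => 0) e = submxcol r (Ordinal hs) by apply: H.
    case=> e; last by rewrite hs in e.
    by rewrite (bool_irrelevance e hs).
  pose v := fun s => cV + GV *m (if insub s is Some j then mu j else 0).
  have hv : forall i : 'I_t, v i = cV + GV *m mu i by move=> i; rewrite /v valK.
  have hbl : in_box lam' := hb.
  have E : lam' = col_mx lam (col_mx (\mxcol_(s < t) rho s) (\mxcol_(j < t) mu j)).
    by rewrite (eq_mxcol rhoE) !submxcolK !vsubmxK.
  exists lam, rho, v; split.
    by move=> k; rewrite mxE; apply: hb.
  split.
    move=> s hs; have -> : s = Ordinal hs by [].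
    rewrite rhoE; apply: in_box_submxcol => k; rewrite !mxE; apply: hb.
  split.
    move=> s hs; exists (mu (Ordinal hs)); split.
      apply: in_box_submxcol => k; rewrite !mxE; apply: hb.
    by rewrite -hv.
  rewrite (@key _ _ _ _ _ _ _ _ _ _ _ _ _ _ _ _ _ _ _ _ _ _ _ _ _ hv) -E.
  by [].
Qed.
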